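(* Under the standing assumptions below, the relation $\preceq$ is a total order on $I$.
   Context: Standing assumptions: $I$ is a finite set of weighted constraints with default values on a finite domain $D$ (each constraint $c$ has a finite variable set $\mathrm{var}(c)$) such that distinct constraints have distinct variable sets, the hypergraph $\mathcal H(I)=(\mathrm{var}(I),\{\mathrm{var}(c)\mid c\in I\})$ is $\beta$-acyclic, and $(x_1,\dots,x_n)$ is a $\beta$-elimination order of $\mathcal H(I)$ (an enumeration of $\mathrm{var}(I)$ such that, for each $k$, $x_{k+1}$ is a nest point—i.e. the edges containing it are totally ordered by inclusion—of the hypergraph with vertices $\mathrm{var}(I)\setminus X_k$ and edges $\{e\setminus X_k\}\setminus\{\emptyset\}$). Let $X_k=\{x_1,\dots,x_k\}$ ($X_0=\emptyset$). For $c,d\in I$, write $c\prec d$ if there exists $k\in\{0,\dots,n\}$ with $\mathrm{var}(c)\setminus X_k\subsetneq\mathrm{var}(d)\setminus X_k$, and $c\preceq d$ if $c\prec d$ or $c=d$. *)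

(* Defs.v *)
From mathcomp Require Import all_boot.
Set Implicit Arguments. Unset Strict Implicit. Unset Printing Implicit Defensive.

Section Hypergraphs.
Variable V : finType.

Definition residual_edges (E : {set {set V}}) (X : {set V}) : {set {set V}} :=
  [set e :\: X | e in E] :\ set0.

Definition nest_point (x : V) (F : {set {set V}}) : Prop :=
  forall e1 e2, e1 \in F -> e2 \in F -> x \in e1 -> x \in e2 ->
    (e1 \subset e2) \/ (e2 \subset e1).

Definition beta_elim_order (Vs : {set V}) (E : {set {set V}}) (xs : seq V) : Prop :=
  [/\ uniq xs, [set x in xs] = Vs &
      forall (pre : seq V) (x : V) (suf : seq V),
        xs = pre ++ x :: suf ->
        nest_point x (residual_edges E [set y in pre])].

(* beta-acyclicity, via the (standard) characterization as existence of a
   beta-elimination order *)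
Definition beta_acyclic (Vs : {set V}) (E : {set {set V}}) : Prop :=
  exists xs, beta_elim_order Vs E xs.

End Hypergraphs.

Section Constraints.
Variables (V C : finType) (var : C -> {set V}).

Definition vars_of (I : {set C}) : {set V} := \bigcup_(c in I) var c.
Definition hyp_edges (I : {set C}) : {set {set V}} := [set var c | c in I].

Definition Xk (xs : seq V) (k : nat) : {set V} := [set x in take k xs].

Definition cprec (xs : seq V) (c d : C) : Prop :=
  exists k, k <= size xs /\ (var c :\: Xk xs k) \proper (var d :\: Xk xs k).

Definition cpreceq (xs : seq V) (c d : C) : Prop := cprec xs c d \/ c = d.

End Constraints.

(* Main.v *)
Require Import Defs.
From mathcomp Require Import all_boot.

Lemma Xk_mono (V : finType) (xs : seq V) k k' : k <= k' -> Xk xs k \subset Xk xs k'.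
Proof.
move=> le; apply/subsetP=> y; rewrite !inE -(subnKC le) takeD mem_cat => ->; done.
Qed.

Lemma sub_diff (V : finType) (A B X Y : {set V}) :
  X \subset Y -> A :\: X \subset B :\: X -> A :\: Y \subset B :\: Y.
Proof.
move=> XY h; apply/subsetP => y; rewrite !inE => /andP[yY yA].
have yX: y \notin X by apply: contra yY; apply/subsetP.
have := subsetP h y; rewrite !inE yX yA /= => /(_ isT) ->; by rewrite yY.
Qed.

Lemma prec_le (V C : finType) (var : C -> {set V}) xs c d k1 k2 :
  k1 <= k2 -> (var c :\: Xk xs k1) \proper (var d :\: Xk xs k1) ->
  (var c :\: Xk xs k2) \subset (var d :\: Xk xs k2).
Proof. move=> le /proper_sub; apply: sub_diff; exact: Xk_mono. Qed.

Lemma total_aux (V C : finType) (var : C -> {set V}) xs c d :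
  var c \subset [set x in xs] -> var d \subset [set x in xs] ->
  forall m k, k + m = size xs -> var c :\: Xk xs k != var d :\: Xk xs k ->
  cprec var xs c d \/ cprec var xs d c.
Proof.
move=> sc sd; elim=> [|m IH] k hk hne.
  move: hne; rewrite addn0 in hk; rewrite /Xk hk take_size.
  have -> : var c :\: [set x in xs] = set0 by apply/setP=> y; rewrite !inE;
    case: (boolP (y \in xs)) => //= yn; apply/negP => yc; move/subsetP: sc => /(_ y yc); rewrite inE (negbTE yn).
  have -> : var d :\: [set x in xs] = set0 by apply/setP=> y; rewrite !inE;
    case: (boolP (y \in xs)) => //= yn; apply/negP => yc; move/subsetP: sd => /(_ y yc); rewrite inE (negbTE yn).
  by rewrite eqxx.
have lt : k < size xs by rewrite -hk addnS ltnS leq_addr.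
case: (eqVneq (var c :\: Xk xs k.+1) (var d :\: Xk xs k.+1)) => heq; last first.
  by apply: (IH k.+1) => //; rewrite addSnnS.
case: xs sc sd hk hne lt heq IH => [|x0 s] // sc sd hk hne lt heq IH.
set xs := x0 :: s in sc sd hk hne lt heq IH *.
have hX : Xk xs k.+1 = nth x0 xs k |: Xk xs k.
  by apply/setP=> y; rewrite /Xk (take_nth x0 lt) !inE mem_rcons inE.
rewrite hX in heq; set x := nth x0 xs k in heq.
have E : forall y, y != x -> (y \in var c :\: Xk xs k) = (y \in var d :\: Xk xs k).
  move=> y yx; have := congr1 (fun S : {set V} => y \in S) heq; rewrite /= !inE (negbTE yx) /=.
  by [].
case: (boolP (x \in var c :\: Xk xs k)) => xc; case: (boolP (x \in var d :\: Xk xs k)) => xd.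
- case/negP: hne; apply/eqP/setP => y; case: (eqVneq y x) => [->|yx]; first by rewrite xc xd.
  exact: E.
- right; exists k; split; first exact: ltnW.
  apply/properP; split; last by exists x.
  apply/subsetP => y yd; have yx : y != x by apply: contraNneq xd => <-.
  by rewrite E.
- left; exists k; split; first exact: ltnW.
  apply/properP; split; last by exists x.
  apply/subsetP => y yc; have yx : y != x by apply: contraNneq xc => <-.
  by rewrite -E.
- case/negP: hne; apply/eqP/setP => y; case: (eqVneq y x) => [->|yx].
    by rewrite (negbTE xc) (negbTE xd).
  exact: E.
Qed.

Theorem lemma3 (V C : finType) (var : C -> {set V}) (I : {set C}) (xs : seq V) :
  {in I &, injective var} ->
  beta_acyclic (vars_of var I) (hyp_edges var I) ->
  beta_elim_order (vars_of var I) (hyp_edges var I) xs ->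
  [/\ {in I, forall c, cpreceq var xs c c},
      {in I &, forall c d, cpreceq var xs c d -> cpreceq var xs d c -> c = d},
      (forall c d e, c \in I -> d \in I -> e \in I ->
         cpreceq var xs c d -> cpreceq var xs d e -> cpreceq var xs c e) &
      {in I &, forall c d, cpreceq var xs c d \/ cpreceq var xs d c}].
Proof.
move=> inj _ [_ hvars _]; split.
- by move=> c _; right.
- move=> c d _ _ [[k1 [_ h1]]|//] [[k2 [_ h2]]|//].
  case: (leqP k1 k2) => le.
    by have := prec_le _ _ _ _ _ _ _ _ le h1; rewrite properE in h2; case/andP: h2 => _ /negP.
  by have := prec_le _ _ _ _ _ _ _ _ (ltnW le) h2; rewrite properE in h1; case/andP: h1 => _ /negP.
- move=> c d e _ _ _ [[k1 [s1 h1]]|<-//] [[k2 [s2 h2]]|<-]; last by left; exists k1.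
  left; case: (leqP k1 k2) => le.
    by exists k2; split => //; apply: sub_proper_trans h2; exact: prec_le _ _ _ _ _ _ _ _ le h1.
  exists k1; split => //; apply: proper_sub_trans h1 _; exact: prec_le _ _ _ _ _ _ _ _ (ltnW le) h2.
- move=> c d cI dI; case: (eqVneq c d) => [->|cd]; first by left; right.
  have sub : forall e, e \in I -> var e \subset [set x in xs].
    by move=> e eI; rewrite hvars; apply/subsetP => y ye; apply/bigcupP; exists e.
  have hne : var c :\: Xk xs 0 != var d :\: Xk xs 0.
    apply: contra cd; rewrite /Xk take0.
    have -> : [set x in [::]] = (set0 : {set V}) by apply/setP=> y; rewrite !inE.
    by rewrite !setD0 => /eqP /(inj _ _ cI dI) ->.
  by case: (@total_aux _ _ var xs c d (sub c cI) (sub d dI) (size xs) 0 (add0n _) hne) => h; [left|right]; left.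
Qed.
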